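(* In system $\mathscr{E}$: let $\Phi\triangleright\Gamma\vdash^{(b,e,m,f)}t\{x/u\}:\sigma$. Then there exist derivations $\Phi_t,\Phi_u$, integers $b_t,b_u,e_t,e_u,m_t,m_u,f_t,f_u$, contexts $\Gamma_t,\Gamma_u$ and a multi-type $\mathcal{A}$ such that $\Phi_t\triangleright\Gamma_t;x:\mathcal{A}\vdash^{(b_t,e_t,m_t,f_t)}t:\sigma$, $\Phi_u\triangleright\Gamma_u\vdash^{(b_u,e_u,m_u,f_u)}u:\mathcal{A}$, $b=b_t+b_u$, $e=e_t+e_u$, $m=m_t+m_u$, $f=f_t+f_u$, and $\Gamma=\Gamma_t\wedge\Gamma_u$.
   Context: Pair pattern calculus: patterns $p,q ::= x\mid\langle p,q\rangle$ (linear); $\mathrm{var}(p)$ = variables of $p$; $p\# q$ means disjoint variables. Terms $t,u ::= x\mid\lambda p.t\mid\langle t,u\rangle\mid t\,u\mid t[p/u]$, $\mathrm{var}(p)$ bound in $t$ in $\lambda p.t$ and $t[p/u]$; terms modulo $\alpha$; $t\{x/u\}$ capture-avoiding substitution. System $\mathscr{E}$. Types: tight types $\mathtt{t} ::= \bullet_{\mathcal{N}}\mid\bullet_{\mathcal{M}}$; types $\sigma ::= \mathtt{t}\mid \mathcal{A}_1\times\mathcal{A}_2\mid \mathcal{A}\to\sigma$; multi-types $\mathcal{A} ::= [\sigma_k]_{k\in K}$ (finite, possibly empty $[\,]$). Contexts map variables to multi-types, $\mathrm{dom}(\Gamma)$ = variables with non-empty multi-type; $\Gamma;x:\mathcal{A}$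 extends $\Gamma$ ($x\notin\mathrm{dom}(\Gamma)$) by $x:\mathcal{A}$; $\wedge$ pointwise multiset union; $\Gamma|_p$ restriction to $\mathrm{var}(p)$; $\Gamma\setminus\mathrm{var}(p)$ removal. $\mathrm{tight}(\sigma)$ iff $\sigma\in\{\bullet_{\mathcal{N}},\bullet_{\mathcal{M}}\}$, extended elementwise. Rules: (pat_v) $x:\mathcal{A}\Vdash^{(1,0,0)} x:\mathcal{A}$. (pat_×) from $\Gamma\Vdash^{(e_p,m_p,f_p)}p:\mathcal{A}$, $\Delta\Vdash^{(e_q,m_q,f_q)}q:\mathcal{B}$, $p\#q$ infer $\Gamma\wedge\Delta\Vdash^{(e_p+e_q,1+m_p+m_q,f_p+f_q)}\langle p,q\rangle:[\mathcal{A}\times\mathcal{B}]$. (pat_p) if $\mathrm{dom}(\Gamma)\subseteq\mathrm{var}(\langle p,q\rangle)$ and $\mathrm{tight}(\Gamma)$ then $\Gamma\Vdash^{(0,0,1)}\langle p,q\rangle:[\bullet_{\mathcal{N}}]$. (ax) $x:[\sigma]\vdash^{(0,0,0,0)}x:\sigma$. (abs) from $\Gamma\vdash^{(b,e,m,f)}t:\sigma$ and $\Gamma|_p\Vdash^{(e_p,m_p,f_p)}p:\mathcal{A}$ infer $\Gamma\setminus\mathrm{var}(p)\vdash^{(b+1,e+e_p,m+m_p,f+f_p)}\lambda p.t:\mathcal{A}\to\sigma$. (abs_p) from $\Gamma\vdash^{(b,e,m,f)}t:\mathtt{t}$ ($\mathtt{t}$ tight) and $\mathrm{tight}(\Gamma|_p)$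 infer $\Gamma\setminus\mathrm{var}(p)\vdash^{(b,e,m,f+1)}\lambda p.t:\bullet_{\mathcal{M}}$. (many) from $(\Gamma_k\vdash^{(b_k,e_k,m_k,f_k)}t:\sigma_k)_{k\in K}$ infer $\wedge_k\Gamma_k\vdash^{(\sum b_k,\sum e_k,\sum m_k,\sum f_k)}t:[\sigma_k]_{k\in K}$. (app) from $\Gamma\vdash^{(b_t,e_t,m_t,f_t)}t:\mathcal{A}\to\sigma$, $\Delta\vdash^{(b_u,e_u,m_u,f_u)}u:\mathcal{A}$ infer $\Gamma\wedge\Delta\vdash^{(b_t+b_u,e_t+e_u,m_t+m_u,f_t+f_u)}t\,u:\sigma$. (app_p) from $\Gamma\vdash^{(b,e,m,f)}t:\bullet_{\mathcal{N}}$ infer $\Gamma\vdash^{(b,e,m,f+1)}t\,u:\bullet_{\mathcal{N}}$. (pair) from $\Gamma\vdash^{(b_t,e_t,m_t,f_t)}t:\mathcal{A}$, $\Delta\vdash^{(b_u,e_u,m_u,f_u)}u:\mathcal{B}$ infer $\Gamma\wedge\Delta\vdash^{(b_t+b_u,e_t+e_u,m_t+m_u,f_t+f_u)}\langle t,u\rangle:\mathcal{A}\times\mathcal{B}$. (pair_p) $\vdash^{(0,0,0,1)}\langle t,u\rangle:\bullet_{\mathcal{M}}$. (match) from $\Gamma\vdash^{(b_t,e_t,m_t,f_t)}t:\sigma$, $\Gamma|_p\Vdash^{(e_p,m_p,f_p)}p:\mathcal{A}$, $\Delta\vdash^{(b_u,e_u,m_u,f_u)}u:\mathcal{A}$ infer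 $(\Gamma\setminus\mathrm{var}(p))\wedge\Delta\vdash^{(b_t+b_u,e_t+e_u+e_p,m_t+m_u+m_p,f_t+f_u+f_p)}t[p/u]:\sigma$. *)

(* Defs.v *)
From Stdlib Require Import List Arith PeanoNat Permutation.
Import ListNotations.

Definition var := nat.

Inductive pat : Type :=
| PVar : var -> pat
| PPair : pat -> pat -> pat.

Fixpoint pvars (p : pat) : list var :=
  match p with
  | PVar x => [x]
  | PPair p q => pvars p ++ pvars q
  end.

Definition pdisj (p q : pat) : Prop :=
  forall y, In y (pvars p) -> ~ In y (pvars q).

Definition linear (p : pat) : Prop := NoDup (pvars p).

Inductive term : Type :=
| Var : var -> term
| Lam : pat -> term -> term
| Pair : term -> term -> term
| App : term -> term -> term
| Match : term -> pat -> term -> term.   (* Match t p u  =  t[p/u] *)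

Definition inpat (y : var) (p : pat) : bool := existsb (Nat.eqb y) (pvars p).

Fixpoint fv (t : term) : list var :=
  match t with
  | Var x => [x]
  | Lam p t => filter (fun y => negb (inpat y p)) (fv t)
  | Pair t u => fv t ++ fv u
  | App t u => fv t ++ fv u
  | Match t p u => filter (fun y => negb (inpat y p)) (fv t) ++ fv u
  end.

Fixpoint bv (t : term) : list var :=
  match t with
  | Var _ => []
  | Lam p t => pvars p ++ bv t
  | Pair t u => bv t ++ bv u
  | App t u => bv t ++ bv u
  | Match t p u => pvars p ++ bv t ++ bv u
  end.

Fixpoint wf_term (t : term) : Prop :=
  match t with
  | Var _ => True
  | Lam p t => linear p /\ wf_term t
  | Pair t u => wf_term t /\ wf_term u
  | App t u => wf_term t /\ wf_term u
  | Match t p u => linear p /\ wf_term t /\ wf_term u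
  end.

(* Substitution t{x/u}; it is capture-avoiding whenever the bound
   variables of t are disjoint from fv(u) (Barendregt convention). *)
Fixpoint subst (t : term) (x : var) (u : term) : term :=
  match t with
  | Var y => if Nat.eqb y x then u else Var y
  | Lam p t' => if inpat x p then Lam p t' else Lam p (subst t' x u)
  | Pair t1 t2 => Pair (subst t1 x u) (subst t2 x u)
  | App t1 t2 => App (subst t1 x u) (subst t2 x u)
  | Match t' p v =>
      Match (if inpat x p then t' else subst t' x u) p (subst v x u)
  end.

(* Types: tight types TN (bullet_N), TM (bullet_M); products of
   multi-types; arrows.  Multi-types are finite multisets, represented
   by lists considered up to (deep) permutation, see meq. *)
Inductive ty : Type :=
| TN : ty
| TM : ty
| TProd : list ty -> list ty -> ty
| TArr : list ty -> ty -> ty.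

Definition mty := list ty.

Inductive teq : ty -> ty -> Prop :=
| teq_N : teq TN TN
| teq_M : teq TM TM
| teq_prod A A' B B' : meq A A' -> meq B B' -> teq (TProd A B) (TProd A' B')
| teq_arr A A' s s' : meq A A' -> teq s s' -> teq (TArr A s) (TArr A' s')
with meq : mty -> mty -> Prop :=
| meq_nil : meq [] []
| meq_skip s s' A A' : teq s s' -> meq A A' -> meq (s :: A) (s' :: A')
| meq_swap s s' A : meq (s :: s' :: A) (s' :: s :: A)
| meq_trans A B C : meq A B -> meq B C -> meq A C.

Definition tight (s : ty) : Prop := s = TN \/ s = TM.

Definition ctx := var -> mty.
Definition ctx_eq (G D : ctx) : Prop := forall y, meq (G y) (D y).
Definition ctx_empty : ctx := fun _ => [].
Definition ctx_single (x : var) (A : mty) : ctx :=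
  fun y => if Nat.eqb y x then A else [].
Definition ctx_union (G D : ctx) : ctx := fun y => G y ++ D y.
(* G;x:A  (used only when x is not in dom G) *)
Definition ctx_ext (G : ctx) (x : var) (A : mty) : ctx :=
  fun y => if Nat.eqb y x then A else G y.
Definition ctx_restr (G : ctx) (p : pat) : ctx :=
  fun y => if inpat y p then G y else [].
Definition ctx_remove (G : ctx) (p : pat) : ctx :=
  fun y => if inpat y p then [] else G y.
Definition in_dom (G : ctx) (y : var) : Prop := G y <> [].
Definition tight_ctx (G : ctx) : Prop := forall y s, In s (G y) -> tight s.

Inductive ptyping : ctx -> pat -> mty -> nat -> nat -> nat -> Prop :=
| pat_v x A : ptyping (ctx_single x A) (PVar x) A 1 0 0
| pat_x G D p q A B ep mp fp eq mq fq :
    ptyping G p A ep mp fp -> ptyping D q B eq mq fq -> pdisj p q ->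
    ptyping (ctx_union G D) (PPair p q) [TProd A B] (ep + eq) (1 + mp + mq) (fp + fq)
| pat_p G p q :
    (forall y, in_dom G y -> In y (pvars (PPair p q))) -> tight_ctx G ->
    ptyping G (PPair p q) [TN] 0 0 1
(* multisets are quotiented: conversion up to multiset equality *)
| pat_conv G G' p A A' e m f :
    ptyping G p A e m f -> ctx_eq G G' -> meq A A' -> ptyping G' p A' e m f.

Inductive typing : ctx -> term -> ty -> nat -> nat -> nat -> nat -> Prop :=
| ty_ax x s : typing (ctx_single x [s]) (Var x) s 0 0 0 0
| ty_abs G t s p A b e m f ep mp fp :
    typing G t s b e m f -> ptyping (ctx_restr G p) p A ep mp fp ->
    typing (ctx_remove G p) (Lam p t) (TArr A s) (b + 1) (e + ep) (m + mp) (f + fp)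
| ty_abs_p G t tt p b e m f :
    typing G t tt b e m f -> tight tt -> tight_ctx (ctx_restr G p) ->
    typing (ctx_remove G p) (Lam p t) TM b e m (f + 1)
| ty_app G D t u A s bt et mt ft bu eu mu fu :
    typing G t (TArr A s) bt et mt ft -> mtyping D u A bu eu mu fu ->
    typing (ctx_union G D) (App t u) s (bt + bu) (et + eu) (mt + mu) (ft + fu)
| ty_app_p G t u b e m f :
    typing G t TN b e m f -> typing G (App t u) TN b e m (f + 1)
| ty_pair G D t u A B bt et mt ft bu eu mu fu :
    mtyping G t A bt et mt ft -> mtyping D u B bu eu mu fu ->
    typing (ctx_union G D) (Pair t u) (TProd A B) (bt + bu) (et + eu) (mt + mu) (ft + fu)
| ty_pair_p t u : typing ctx_empty (Pair t u) TM 0 0 0 1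
| ty_match G D t p u s A bt et mt ft ep mp fp bu eu mu fu :
    typing G t s bt et mt ft -> ptyping (ctx_restr G p) p A ep mp fp ->
    mtyping D u A bu eu mu fu ->
    typing (ctx_union (ctx_remove G p) D) (Match t p u) s
      (bt + bu) (et + eu + ep) (mt + mu + mp) (ft + fu + fp)
| ty_conv G G' t s s' b e m f :
    typing G t s b e m f -> ctx_eq G G' -> teq s s' -> typing G' t s' b e m f
with mtyping : ctx -> term -> mty -> nat -> nat -> nat -> nat -> Prop :=
| many_nil t : mtyping ctx_empty t [] 0 0 0 0
| many_cons G D t s A b e m f b' e' m' f' :
    typing G t s b e m f -> mtyping D t A b' e' m' f' ->
    mtyping (ctx_union G D) t (s :: A) (b + b') (e + e') (m + m') (f + f')
| many_conv G G' t A A' b e m f :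
    mtyping G t A b e m f -> ctx_eq G G' -> meq A A' -> mtyping G' t A' b e m f.

(* Main.v *)
Require Import Defs.
From Stdlib Require Import List Arith PeanoNat Permutation Lia.
Import ListNotations.

Fixpoint teq_refl (s : ty) : teq s s :=
  match s with
  | TN => teq_N
  | TM => teq_M
  | TProd A B =>
    let fix mr (A : list ty) : meq A A :=
      match A with
      | [] => meq_nil
      | a :: A' => meq_skip a a A' A' (teq_refl a) (mr A')
      end in
    teq_prod A A B B (mr A) (mr B)
  | TArr A s' =>
    let fix mr (A : list ty) : meq A A :=
      match A with
      | [] => meq_nil
      | a :: A' => meq_skip a a A' A' (teq_refl a) (mr A')
      end in
    teq_arr A A s' s' (mr A) (teq_refl s')
  end.

Lemma meq_refl A : meq A A.
Proof. induction A; constructor; auto using teq_refl. Qed.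

Scheme teq_min := Minimality for teq Sort Prop
with meq_min := Minimality for meq Sort Prop.
Combined Scheme teq_meq_min from teq_min, meq_min.

Lemma teq_meq_sym : (forall s s', teq s s' -> teq s' s) /\ (forall A A', meq A A' -> meq A' A).
Proof.
  apply teq_meq_min; intros.
  - constructor. - constructor. - constructor; auto. - constructor; auto.
  - constructor. - constructor; auto. - apply meq_swap. - eapply meq_trans; eauto.
Qed.
Lemma meq_sym A B : meq A B -> meq B A. Proof. apply teq_meq_sym. Qed.

Lemma meq_app_l A B B' : meq B B' -> meq (A ++ B) (A ++ B').
Proof. induction A; simpl; auto. intros; constructor; auto using teq_refl. Qed.

Lemma meq_app A A' B B' : meq A A' -> meq B B' -> meq (A ++ B) (A' ++ B').
Proof.
  intros H; revert B B'; induction H; intros B0 B0' HB; simpl; auto.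
  - constructor; auto.
  - eapply meq_trans; [apply meq_swap|]. constructor; [apply teq_refl|].
    constructor; [apply teq_refl|]. apply meq_app_l; auto.
  - eapply meq_trans; [apply IHmeq1; apply meq_refl|]. apply IHmeq2; auto.
Qed.

Lemma perm_meq A B : Permutation A B -> meq A B.
Proof.
  induction 1.
  - constructor.
  - constructor; auto using teq_refl.
  - apply meq_swap.
  - eapply meq_trans; eauto.
Qed.

Lemma meq_length A B : meq A B -> length A = length B.
Proof. induction 1; simpl; congruence. Qed.

Lemma meq_nil_inv A : meq [] A -> A = [].
Proof. intros H; apply meq_length in H; destruct A; simpl in *; congruence. Qed.

Lemma teq_tight s s' : teq s s' -> tight s -> tight s'.
Proof. intros H [->| ->]; inversion H; subst; red; auto. Qed.

Lemma meq_tight A B : meq A B -> (forall s, In s A -> tight s) -> forall s, In s B -> tight s.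
Proof.
  induction 1; simpl; intros HA s0 Hs.
  - contradiction.
  - destruct Hs as [<-|Hs]; [eapply teq_tight; eauto|eauto].
  - apply HA; tauto.
  - eauto.
Qed.

Definition bvc (t u : term) := forall y, In y (bv t) -> ~ In y (fv u).

Lemma ctx_eq_refl G : ctx_eq G G. Proof. intro; apply meq_refl. Qed.
Lemma ctx_eq_sym G D : ctx_eq G D -> ctx_eq D G. Proof. intros H y; apply meq_sym; auto. Qed.
Lemma ctx_eq_trans G D E : ctx_eq G D -> ctx_eq D E -> ctx_eq G E.
Proof. intros H1 H2 y; eapply meq_trans; eauto. Qed.

Lemma inpat_In y p : inpat y p = true -> In y (pvars p).
Proof. unfold inpat; intros H; apply existsb_exists in H as [z [Hz E]].
  apply Nat.eqb_eq in E; subst; auto. Qed.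

Lemma filter_notin y l (P : var -> bool) : ~ In y (filter P l) -> P y = false \/ ~ In y l.
Proof. intros H. destruct (P y) eqn:E; auto. right; intro; apply H; apply filter_In; auto. Qed.

Scheme typing_mut := Induction for typing Sort Prop
with mtyping_mut := Induction for mtyping Sort Prop.
Combined Scheme typing_mtyping_mut from typing_mut, mtyping_mut.

Lemma relev :
  (forall G t s b e m f, typing G t s b e m f -> forall y, ~ In y (fv t) -> G y = []) /\
  (forall G t A b e m f, mtyping G t A b e m f -> forall y, ~ In y (fv t) -> G y = []).
Proof.
  apply typing_mtyping_mut; simpl; intros; unfold ctx_single, ctx_remove, ctx_union, ctx_empty in *.
  - destruct (Nat.eqb_spec y x); subst; tauto.
  - destruct (inpat y p) eqn:E; auto. apply filter_notin in H0 as [H0|H0]; simpl in H0; [rewrite E in H0; discriminate|auto].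
  - destruct (inpat y p) eqn:E; auto. apply filter_notin in H0 as [H0|H0]; simpl in H0; [rewrite E in H0; discriminate|auto].
  - rewrite in_app_iff in H1. rewrite H, H0; auto.
  - rewrite in_app_iff in H0. auto.
  - rewrite in_app_iff in H1. rewrite H, H0; auto.
  - auto.
  - rewrite in_app_iff in H1. rewrite H0 by tauto.
    destruct (inpat y p) eqn:E; auto. rewrite app_nil_r.
    apply H. intro Hy. apply H1. left. apply filter_In. rewrite E; auto.
  - specialize (c y). rewrite H in c by auto. apply meq_nil_inv; auto.
  - auto.
  - rewrite H, H0; auto.
  - specialize (c y). rewrite H in c by auto. apply meq_nil_inv; auto.
Qed.

Ltac unf := unfold ctx_ext, ctx_union, ctx_remove, ctx_restr, ctx_empty, ctx_single in *.

Lemma ext_nil G x : G x = [] -> ctx_eq G (ctx_ext G x []).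
Proof. intros H y; unf. destruct (Nat.eqb_spec y x); subst; rewrite ?H; apply meq_refl. Qed.

Lemma ext_union G1 G2 x A1 A2 :
  ctx_eq (ctx_union (ctx_ext G1 x A1) (ctx_ext G2 x A2)) (ctx_ext (ctx_union G1 G2) x (A1 ++ A2)).
Proof. intros y; unf. destruct (Nat.eqb_spec y x); apply meq_refl. Qed.

Lemma union_ext_r G1 G2 x A : G1 x = [] ->
  ctx_eq (ctx_union G1 (ctx_ext G2 x A)) (ctx_ext (ctx_union G1 G2) x A).
Proof. intros H y; unf. destruct (Nat.eqb_spec y x); subst; rewrite ?H; apply meq_refl. Qed.

Lemma union_empty_r G : ctx_eq G (ctx_union G ctx_empty).
Proof. intros y; unf. rewrite app_nil_r; apply meq_refl. Qed.

Lemma union_empty_l G : ctx_eq G (ctx_union ctx_empty G).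
Proof. intros y; unf. apply meq_refl. Qed.

Lemma union_split G D Gt1 Gu1 Gt2 Gu2 :
  ctx_eq G (ctx_union Gt1 Gu1) -> ctx_eq D (ctx_union Gt2 Gu2) ->
  ctx_eq (ctx_union G D) (ctx_union (ctx_union Gt1 Gt2) (ctx_union Gu1 Gu2)).
Proof.
  intros H1 H2 y; unf. eapply meq_trans; [apply meq_app; [apply H1|apply H2]|].
  apply perm_meq. rewrite <- !app_assoc. apply Permutation_app_head.
  rewrite !app_assoc. apply Permutation_app_tail. apply Permutation_app_comm.
Qed.

Lemma remove_split G0 Gt Gu p :
  ctx_eq G0 (ctx_union Gt Gu) -> (forall y, inpat y p = true -> Gu y = []) ->
  ctx_eq (ctx_remove G0 p) (ctx_union (ctx_remove Gt p) Gu).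
Proof.
  intros H1 H2 y; unf. destruct (inpat y p) eqn:E.
  - rewrite H2 by auto. constructor.
  - apply H1.
Qed.

Lemma restr_split G0 Gt Gu p x A :
  ctx_eq G0 (ctx_union Gt Gu) -> (forall y, inpat y p = true -> Gu y = []) ->
  inpat x p = false ->
  ctx_eq (ctx_restr G0 p) (ctx_restr (ctx_ext Gt x A) p).
Proof.
  intros H1 H2 Hx y; unf. destruct (inpat y p) eqn:E.
  - destruct (Nat.eqb_spec y x); [subst; congruence|].
    specialize (H1 y). unf. rewrite H2, app_nil_r in H1 by auto. auto.
  - constructor.
Qed.

Lemma remove_ext G x A p : inpat x p = false ->
  ctx_eq (ctx_remove (ctx_ext G x A) p) (ctx_ext (ctx_remove G p) x A).
Proof.
  intros Hx y; unf. destruct (inpat y p) eqn:E; destruct (Nat.eqb_spec y x);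
  subst; try congruence; apply meq_refl.
Qed.

Lemma tight_restr G0 Gt Gu p x A :
  tight_ctx (ctx_restr G0 p) -> ctx_eq G0 (ctx_union Gt Gu) -> inpat x p = false ->
  tight_ctx (ctx_restr (ctx_ext Gt x A) p).
Proof.
  intros Ht H1 Hx y s; unf. destruct (inpat y p) eqn:E; [|simpl; tauto].
  destruct (Nat.eqb_spec y x); [subst; congruence|].
  intros Hs. apply (meq_tight _ _ (H1 y)).
  - intros s0 Hs0. apply (Ht y). unf. rewrite E. auto.
  - unf. apply in_or_app; auto.
Qed.

Lemma ctx_eq_union_l G G' D : ctx_eq G G' -> ctx_eq (ctx_union G D) (ctx_union G' D).
Proof. intros H y; unf; apply meq_app; auto using meq_refl. Qed.

Lemma mt_app G1 t A1 b e m f : mtyping G1 t A1 b e m f ->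
  forall G2 A2 b' e' m' f', mtyping G2 t A2 b' e' m' f' ->
  mtyping (ctx_union G1 G2) t (A1 ++ A2) (b + b') (e + e') (m + m') (f + f').
Proof.
  induction 1; intros G2 A2 b2 e2 m2 f2 H2; simpl.
  - eapply many_conv; [exact H2| |apply meq_refl]. apply union_empty_l.
  - specialize (IHmtyping _ _ _ _ _ _ H2).
    pose proof (many_cons _ _ _ _ _ _ _ _ _ _ _ _ _ H IHmtyping) as Hc.
    rewrite !Nat.add_assoc in Hc.
    eapply many_conv; [exact Hc| |apply meq_refl].
    intros y; unf. rewrite app_assoc. apply meq_refl.
  - eapply many_conv; [apply IHmtyping; eauto| |apply meq_app; auto using meq_refl].
    apply ctx_eq_union_l; auto.
Qed.

Definition Cty x u G t s b e m f : Prop :=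
  exists (Gt Gu : ctx) (A : mty) (bt bu et eu mt mu ft fu : nat),
    Gt x = nil /\
    typing (ctx_ext Gt x A) t s bt et mt ft /\
    mtyping Gu u A bu eu mu fu /\
    b = bt + bu /\ e = et + eu /\ m = mt + mu /\ f = ft + fu /\
    ctx_eq G (ctx_union Gt Gu).

Definition Cm x u G t B b e m f : Prop :=
  exists (Gt Gu : ctx) (A : mty) (bt bu et eu mt mu ft fu : nat),
    Gt x = nil /\
    mtyping (ctx_ext Gt x A) t B bt et mt ft /\
    mtyping Gu u A bu eu mu fu /\
    b = bt + bu /\ e = et + eu /\ m = mt + mu /\ f = ft + fu /\
    ctx_eq G (ctx_union Gt Gu).

Lemma var_case x u G s b e m f : typing G u s b e m f -> Cty x u G (Var x) s b e m f.
Proof.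
  intros H. exists ctx_empty, (ctx_union G ctx_empty), [s], 0, (b + 0), 0, (e + 0), 0, (m + 0), 0, (f + 0).
  repeat split; try lia.
  - exact (ty_ax x s).
  - econstructor; [exact H|constructor].
  - eapply ctx_eq_trans; [apply union_empty_r|]. apply union_empty_l.
Qed.

Lemma unchanged x u G t s b e m f : typing G t s b e m f -> G x = [] -> Cty x u G t s b e m f.
Proof.
  intros H Hx. exists G, ctx_empty, [], b, 0, e, 0, m, 0, f, 0.
  repeat split; try lia; auto.
  - eapply ty_conv; [exact H| |apply teq_refl]. apply ext_nil; auto.
  - constructor.
  - apply union_empty_r.
Qed.

Lemma bv_pat_rel p t u Gu A b e m f : (forall y, In y (pvars p) -> In y (bv t)) ->
  bvc t u -> mtyping Gu u A b e m f -> forall y, inpat y p = true -> Gu y = [].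
Proof.
  intros Hs Hb Hm y Hy. apply (proj2 relev _ _ _ _ _ _ _ Hm). apply Hb, Hs, inpat_In; auto.
Qed.

Ltac varsub :=
  match goal with
  | H : _ = (if Nat.eqb ?v ?x then ?u else Var ?v) |- _ =>
    destruct (Nat.eqb_spec v x) as [<-|?];
    [subst u; apply var_case; econstructor; eauto | discriminate]
  end.

Ltac bvsub Hb := let y := fresh in let Hy := fresh in
  intros y Hy; apply Hb; simpl; rewrite ?in_app_iff; tauto.

Lemma main x u :
  (forall G T s b e m f, typing G T s b e m f -> forall t, T = subst t x u -> bvc t u -> Cty x u G t s b e m f) /\
  (forall G T B b e m f, mtyping G T B b e m f -> forall t, T = subst t x u -> bvc t u -> Cm x u G t B b e m f).
Proof.
  apply (typing_mtyping_mut
    (fun G T s b e m f _ => forall t, T = subst t x u -> bvc t u -> Cty x u G t s b e m f)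
    (fun G T B b e m f _ => forall t, T = subst t x u -> bvc t u -> Cm x u G t B b e m f)).
  -
    intros x0 s0 t Heq Hb. destruct t as [v|p' t'|t1 t2|t1 t2|t1 p' t2]; simpl in Heq;
      try (destruct (inpat x p'); discriminate); try discriminate.
destruct (Nat.eqb_spec v x) as [<-|Hne].
    + subst u. apply var_case. constructor.
    + injection Heq as Hv; subst x0. apply unchanged; [constructor|]. unf.
      destruct (Nat.eqb_spec x v); congruence.
  -
    intros G0 t0 s0 p A b e m f ep mp fp Ht IH Hp t Heq Hb.
    destruct t as [v|p' t'|t1 t2|t1 t2|t1 p' t2]; simpl in Heq; try varsub; try discriminate.
    destruct (inpat x p') eqn:Ex; injection Heq as <- ->.
    + apply unchanged; [econstructor; eauto|]. unf. rewrite Ex; auto.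
    + destruct (IH t' eq_refl ltac:(bvsub Hb)) as (Gt & Gu & A' & bt & bu & et & eu & mt & mu & ft & fu & Hx & Ht' & Hu & -> & -> & -> & -> & Hc).
      assert (HGu := bv_pat_rel p (Lam p t') u _ _ _ _ _ _ ltac:(intros; simpl; rewrite in_app_iff; tauto) Hb Hu).
      exists (ctx_remove Gt p), Gu, A', (bt + 1), bu, (et + ep), eu, (mt + mp), mu, (ft + fp), fu.
      repeat split; try lia; auto.
      * unf. rewrite Ex; auto.
      * eapply ty_conv; [eapply ty_abs; [exact Ht'|] | apply remove_ext; auto | apply teq_refl].
        eapply pat_conv; [exact Hp| |apply meq_refl]. eapply restr_split; eauto.
      * apply remove_split; auto.
  -
    intros G0 t0 tt p b e m f Ht IH Htt Hti t Heq Hb.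
    destruct t as [v|p' t'|t1 t2|t1 t2|t1 p' t2]; simpl in Heq; try varsub; try discriminate.
    destruct (inpat x p') eqn:Ex; injection Heq as <- ->.
    + apply unchanged; [econstructor; eauto|]. unf. rewrite Ex; auto.
    + destruct (IH t' eq_refl ltac:(bvsub Hb)) as (Gt & Gu & A' & bt & bu & et & eu & mt & mu & ft & fu & Hx & Ht' & Hu & -> & -> & -> & -> & Hc).
      assert (HGu := bv_pat_rel p (Lam p t') u _ _ _ _ _ _ ltac:(intros; simpl; rewrite in_app_iff; tauto) Hb Hu).
      exists (ctx_remove Gt p), Gu, A', bt, bu, et, eu, mt, mu, (ft + 1), fu.
      repeat split; try lia; auto.
      * unf. rewrite Ex; auto.
      * eapply ty_conv; [eapply ty_abs_p; [exact Ht'|exact Htt|] | apply remove_ext; auto | apply teq_refl].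
        eapply tight_restr; eauto.
      * apply remove_split; auto.
  -
    intros G0 D0 t0 u0 A s0 bt0 et0 mt0 ft0 bu0 eu0 mu0 fu0 Ht IH1 Hm IH2 t Heq Hb.
    destruct t as [v|p' t'|t1 t2|t1 t2|t1 p' t2]; simpl in Heq; try varsub;
      try (destruct (inpat x p'); discriminate); try discriminate.
    injection Heq as -> ->.
    destruct (IH1 t1 eq_refl ltac:(bvsub Hb)) as (Gt1 & Gu1 & A1 & bt1 & bu1 & et1 & eu1 & mt1 & mu1 & ft1 & fu1 & Hx1 & Ht1 & Hu1 & -> & -> & -> & -> & Hc1).
    destruct (IH2 t2 eq_refl ltac:(bvsub Hb)) as (Gt2 & Gu2 & A2 & bt2 & bu2 & et2 & eu2 & mt2 & mu2 & ft2 & fu2 & Hx2 & Ht2 & Hu2 & -> & -> & -> & -> & Hc2).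
    exists (ctx_union Gt1 Gt2), (ctx_union Gu1 Gu2), (A1 ++ A2), (bt1 + bt2), (bu1 + bu2), (et1 + et2), (eu1 + eu2), (mt1 + mt2), (mu1 + mu2), (ft1 + ft2), (fu1 + fu2).
    repeat split; try lia.
    + unf. rewrite Hx1, Hx2; auto.
    + eapply ty_conv; [eapply ty_app; [exact Ht1|exact Ht2] | apply ext_union | apply teq_refl].
    + apply mt_app; auto.
    + apply union_split; auto.
  -
    intros G0 t0 u0 b e m f Ht IH t Heq Hb.
    destruct t as [v|p' t'|t1 t2|t1 t2|t1 p' t2]; simpl in Heq; try varsub;
      try (destruct (inpat x p'); discriminate); try discriminate.
    injection Heq as -> ->.
    destruct (IH t1 eq_refl ltac:(bvsub Hb)) as (Gt1 & Gu1 & A1 & bt1 & bu1 & et1 & eu1 & mt1 & mu1 & ft1 & fu1 & Hx1 & Ht1 & Hu1 & -> & -> & -> & -> & Hc1).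
    exists Gt1, Gu1, A1, bt1, bu1, et1, eu1, mt1, mu1, (ft1 + 1), fu1.
    repeat split; try lia; auto.
    apply ty_app_p; auto.
  -
    intros G0 D0 t0 u0 A B bt0 et0 mt0 ft0 bu0 eu0 mu0 fu0 Ht IH1 Hm IH2 t Heq Hb.
    destruct t as [v|p' t'|t1 t2|t1 t2|t1 p' t2]; simpl in Heq; try varsub;
      try (destruct (inpat x p'); discriminate); try discriminate.
    injection Heq as -> ->.
    destruct (IH1 t1 eq_refl ltac:(bvsub Hb)) as (Gt1 & Gu1 & A1 & bt1 & bu1 & et1 & eu1 & mt1 & mu1 & ft1 & fu1 & Hx1 & Ht1 & Hu1 & -> & -> & -> & -> & Hc1).
    destruct (IH2 t2 eq_refl ltac:(bvsub Hb)) as (Gt2 & Gu2 & A2 & bt2 & bu2 & et2 & eu2 & mt2 & mu2 & ft2 & fu2 & Hx2 & Ht2 & Hu2 & -> & -> & -> & -> & Hc2).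
    exists (ctx_union Gt1 Gt2), (ctx_union Gu1 Gu2), (A1 ++ A2), (bt1 + bt2), (bu1 + bu2), (et1 + et2), (eu1 + eu2), (mt1 + mt2), (mu1 + mu2), (ft1 + ft2), (fu1 + fu2).
    repeat split; try lia.
    + unf. rewrite Hx1, Hx2; auto.
    + eapply ty_conv; [eapply ty_pair; [exact Ht1|exact Ht2] | apply ext_union | apply teq_refl].
    + apply mt_app; auto.
    + apply union_split; auto.
  -
    intros t0 u0 t Heq Hb.
    destruct t as [v|p' t'|t1 t2|t1 t2|t1 p' t2]; simpl in Heq; try varsub;
      try (destruct (inpat x p'); discriminate); try discriminate.
    apply unchanged; [constructor|reflexivity].
  -
    intros G0 D0 t0 p v0 s0 A bt0 et0 mt0 ft0 ep mp fp bu0 eu0 mu0 fu0 Ht IH1 Hp Hm IH2 t Heq Hb.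
    destruct t as [v|p' t'|t1 t2|t1 t2|t1 p' t2]; simpl in Heq; try varsub;
      try (destruct (inpat x p'); discriminate); try discriminate.
    injection Heq as Ht0 -> ->.
    destruct (IH2 t2 eq_refl ltac:(bvsub Hb)) as (Gt2 & Gu2 & A2 & bt2 & bu2 & et2 & eu2 & mt2 & mu2 & ft2 & fu2 & Hx2 & Ht2 & Hu2 & -> & -> & -> & -> & Hc2).
    destruct (inpat x p') eqn:Ex; subst t0.
    + exists (ctx_union (ctx_remove G0 p') Gt2), Gu2, A2, (bt0 + bt2), bu2, (et0 + et2 + ep), eu2, (mt0 + mt2 + mp), mu2, (ft0 + ft2 + fp), fu2.
      repeat split; try lia.
      * unf. rewrite Ex, Hx2; auto.
      * eapply ty_conv; [eapply ty_match; [exact Ht|exact Hp|exact Ht2] | | apply teq_refl].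
        apply union_ext_r. unf. rewrite Ex; auto.
      * auto.
      * intros y. unf. rewrite <- app_assoc. apply meq_app; [apply meq_refl|apply Hc2].
    + destruct (IH1 t1 eq_refl ltac:(bvsub Hb)) as (Gt1 & Gu1 & A1 & bt1 & bu1 & et1 & eu1 & mt1 & mu1 & ft1 & fu1 & Hx1 & Ht1 & Hu1 & -> & -> & -> & -> & Hc1).
      assert (HGu := bv_pat_rel p' (Match t1 p' t2) u _ _ _ _ _ _ ltac:(intros; simpl; rewrite in_app_iff; tauto) Hb Hu1).
      exists (ctx_union (ctx_remove Gt1 p') Gt2), (ctx_union Gu1 Gu2), (A1 ++ A2), (bt1 + bt2), (bu1 + bu2), (et1 + et2 + ep), (eu1 + eu2), (mt1 + mt2 + mp), (mu1 + mu2), (ft1 + ft2 + fp), (fu1 + fu2).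
      repeat split; try lia.
      * unf. rewrite Ex, Hx1, Hx2; auto.
      * eapply ty_conv; [eapply ty_match; [exact Ht1| |exact Ht2] | | apply teq_refl].
        -- eapply pat_conv; [exact Hp| |apply meq_refl]. eapply restr_split; eauto.
        -- eapply ctx_eq_trans; [apply ctx_eq_union_l; apply remove_ext; auto|]. apply ext_union.
      * apply mt_app; auto.
      * apply union_split; auto. apply remove_split; auto.
  -
    intros G0 G' t0 s0 s' b e m f Ht IH Hc Hs t Heq Hb.
    destruct (IH t Heq Hb) as (Gt & Gu & A & bt & bu & et & eu & mt & mu & ft & fu & Hx & Ht' & Hu & -> & -> & -> & -> & Hc').
    exists Gt, Gu, A, bt, bu, et, eu, mt, mu, ft, fu.
    repeat split; auto.
    + eapply ty_conv; [exact Ht'|apply ctx_eq_refl|exact Hs].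
    + eapply ctx_eq_trans; [apply ctx_eq_sym; exact Hc|exact Hc'].
  -
    intros t0 t Heq Hb.
    exists ctx_empty, ctx_empty, [], 0, 0, 0, 0, 0, 0, 0, 0.
    repeat split; auto.
    + eapply many_conv; [apply many_nil| |apply meq_refl]. apply ext_nil; reflexivity.
    + constructor.
    + apply union_empty_r.
  -
    intros G0 D0 t0 s0 A b e m f b' e' m' f' Ht IH1 Hm IH2 t Heq Hb.
    destruct (IH1 t Heq Hb) as (Gt1 & Gu1 & A1 & bt1 & bu1 & et1 & eu1 & mt1 & mu1 & ft1 & fu1 & Hx1 & Ht1 & Hu1 & -> & -> & -> & -> & Hc1).
    destruct (IH2 t Heq Hb) as (Gt2 & Gu2 & A2 & bt2 & bu2 & et2 & eu2 & mt2 & mu2 & ft2 & fu2 & Hx2 & Ht2 & Hu2 & -> & -> & -> & -> & Hc2).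
    exists (ctx_union Gt1 Gt2), (ctx_union Gu1 Gu2), (A1 ++ A2), (bt1 + bt2), (bu1 + bu2), (et1 + et2), (eu1 + eu2), (mt1 + mt2), (mu1 + mu2), (ft1 + ft2), (fu1 + fu2).
    repeat split; try lia.
    + unf. rewrite Hx1, Hx2; auto.
    + eapply many_conv; [eapply many_cons; [exact Ht1|exact Ht2] | apply ext_union | apply meq_refl].
    + apply mt_app; auto.
    + apply union_split; auto.
  -
    intros G0 G' t0 A A' b e m f Hm IH Hc HA t Heq Hb.
    destruct (IH t Heq Hb) as (Gt & Gu & B & bt & bu & et & eu & mt & mu & ft & fu & Hx & Ht' & Hu & -> & -> & -> & -> & Hc').
    exists Gt, Gu, B, bt, bu, et, eu, mt, mu, ft, fu.
    repeat split; auto.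
    + eapply many_conv; [exact Ht'|apply ctx_eq_refl|exact HA].
    + eapply ctx_eq_trans; [apply ctx_eq_sym; exact Hc|exact Hc'].
Qed.

Theorem lemma8 (G : ctx) (t u : term) (x : var) (s : ty) (b e m f : nat) :
  wf_term t -> wf_term u ->
  (forall y, In y (bv t) -> ~ In y (fv u)) ->
  typing G (subst t x u) s b e m f ->
  exists (Gt Gu : ctx) (A : mty) (bt bu et eu mt mu ft fu : nat),
    Gt x = nil /\
    typing (ctx_ext Gt x A) t s bt et mt ft /\
    mtyping Gu u A bu eu mu fu /\
    b = bt + bu /\ e = et + eu /\ m = mt + mu /\ f = ft + fu /\
    ctx_eq G (ctx_union Gt Gu).
Proof.
  intros _ _ Hb H.
  exact (proj1 (main x u) _ _ _ _ _ _ _ H t eq_refl Hb).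
Qed.
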